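(* Let $K$ be a nonempty convex subset of a real Hausdorff locally convex topological vector space $X$, let $Y$ be a nonempty finite set and let $U\subseteq K$ be self-segment-dense in $K$. Let $f:K\times Y\to\mathbb R$ satisfy: (i) for every $y\in Y$ the map $x\mapsto f(x,y)$ is convex and lower semicontinuous on $U$; (ii) for all $y_1,y_2\in Y$ and $t\in[0,1]$ there exists $y_3\in Y$ with $f(x,y_3)\ge(1-t)f(x,y_1)+tf(x,y_2)$ for all $x\in U$; (iii) for every $y\in Y$ the infimum $\inf_{x\in U}f(x,y)$ is attained. Then $$\inf_{x\in U}\sup_{y\in Y}f(x,y)=\sup_{y\in Y}\min_{x\in U}f(x,y).$$
   Context: $[x,y]=\{x+t(y-x):t\in[0,1]\}$. Convex on $U$: $h((1-t)u+tv)\le(1-t)h(u)+th(v)$ whenever $u,v\in U$, $t\in[0,1]$, $(1-t)u+tv\in U$. Lower semicontinuous on $U$: for every $u\in U$ and net $(u_i)\subseteq U$ with $u_i\to u$, $\liminf h(u_i)\ge h(u)$. Self-segment-dense: for convex $V$ and $U\subseteq V$, $U$ is self-segment-dense in $V$ if $V\subseteq\operatorname{cl}U$ and for all $x,y\in U$, $[x,y]\cap U$ is dense in $[x,y]$. *)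

(* Defs.v *)
From Stdlib Require Export Reals.
Open Scope R_scope.

Record LCTVS := {
  carrier :> Type;
  vadd : carrier -> carrier -> carrier;
  vzero : carrier;
  vopp : carrier -> carrier;
  vscal : R -> carrier -> carrier;
  vadd_assoc : forall x y z, vadd x (vadd y z) = vadd (vadd x y) z;
  vadd_comm : forall x y, vadd x y = vadd y x;
  vadd_0 : forall x, vadd x vzero = x;
  vadd_opp : forall x, vadd x (vopp x) = vzero;
  vscal_1 : forall x, vscal 1 x = x;
  vscal_assoc : forall a b x, vscal a (vscal b x) = vscal (a * b) x;
  vscal_distr_v : forall a x y, vscal a (vadd x y) = vadd (vscal a x) (vscal a y);
  vscal_distr_s : forall a b x, vscal (a + b) x = vadd (vscal a x) (vscal b x);
  is_open : (carrier -> Prop) -> Prop;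
  open_full : is_open (fun _ => True);
  open_inter : forall A B, is_open A -> is_open B -> is_open (fun x => A x /\ B x);
  open_union : forall (I : Type) (F : I -> carrier -> Prop),
      (forall i, is_open (F i)) -> is_open (fun x => exists i, F i x);
  vadd_cont : forall x y W, is_open W -> W (vadd x y) ->
      exists A B, is_open A /\ A x /\ is_open B /\ B y /\
        forall x' y', A x' -> B y' -> W (vadd x' y');
  vscal_cont : forall t x W, is_open W -> W (vscal t x) ->
      exists d A, 0 < d /\ is_open A /\ A x /\
        forall s x', Rabs (s - t) < d -> A x' -> W (vscal s x');
  hausdorff : forall x y, x <> y ->
      exists A B, is_open A /\ A x /\ is_open B /\ B y /\
        forall z, ~ (A z /\ B z);
  locally_convex : forall W, is_open W -> W vzero ->
      exists V, is_open V /\ V vzero /\ (forall z, V z -> W z) /\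
        forall x y t, V x -> V y -> 0 <= t <= 1 ->
          V (vadd (vscal (1 - t) x) (vscal t y))
}.

Arguments vadd {_}. Arguments vscal {_}. Arguments vopp {_}. Arguments is_open {_}.

Section Defs.
Variable X : LCTVS.

Definition segpt (x y : X) (t : R) : X := vadd x (vscal t (vadd y (vopp x))).

Definition segment (x y : X) (z : X) : Prop := exists t, 0 <= t <= 1 /\ z = segpt x y t.

Definition convex_set (V : X -> Prop) : Prop :=
  forall x y t, V x -> V y -> 0 <= t <= 1 -> V (vadd (vscal (1 - t) x) (vscal t y)).

Definition closure (U : X -> Prop) (z : X) : Prop :=
  forall W, is_open W -> W z -> exists u, W u /\ U u.

(* A is dense in B (B with the subspace topology), A a subset of B *)
Definition dense_in (A B : X -> Prop) : Prop :=
  forall z, B z -> forall W, is_open W -> W z -> exists u, W u /\ A u.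

Definition self_segment_dense (U V : X -> Prop) : Prop :=
  (forall z, V z -> closure U z) /\
  forall x y, U x -> U y -> dense_in (fun z => segment x y z /\ U z) (segment x y).

Definition convex_on (U : X -> Prop) (h : X -> R) : Prop :=
  forall u v t, U u -> U v -> 0 <= t <= 1 -> U (vadd (vscal (1 - t) u) (vscal t v)) ->
    h (vadd (vscal (1 - t) u) (vscal t v)) <= (1 - t) * h u + t * h v.

Record directed := {
  dom :> Type;
  dle : dom -> dom -> Prop;
  dle_refl : forall i, dle i i;
  dle_trans : forall i j k, dle i j -> dle j k -> dle i k;
  dle_dir : forall i j, exists k, dle i k /\ dle j k;
  dom_inh : inhabited dom
}.

Definition eventually (D : directed) (P : D -> Prop) : Prop :=
  exists i0, forall i, dle D i0 i -> P i.

Definition net_conv (D : directed) (u : D -> X) (x : X) : Prop :=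
  forall W, is_open W -> W x -> eventually D (fun i => W (u i)).

(* liminf_i a_i >= c, unfolded: for every b < c, eventually a_i > b *)
Definition liminf_ge (D : directed) (a : D -> R) (c : R) : Prop :=
  forall b, b < c -> eventually D (fun i => b < a i).

Definition lsc_on (U : X -> Prop) (h : X -> R) : Prop :=
  forall (u : X) (D : directed) (ui : D -> X),
    U u -> (forall i, U (ui i)) -> net_conv D ui u -> liminf_ge D (fun i => h (ui i)) (h u).

End Defs.

Arguments segment {_}. Arguments convex_set {_}. Arguments self_segment_dense {_}.
Arguments convex_on {_}. Arguments lsc_on {_}.

Definition is_sup (P : R -> Prop) (s : R) : Prop := is_lub P s.
Definition is_inf (P : R -> Prop) (s : R) : Prop :=
  (forall r, P r -> s <= r) /\ (forall b, (forall r, P r -> b <= r) -> b <= s).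
Definition is_min (P : R -> Prop) (m : R) : Prop := P m /\ forall r, P r -> m <= r.

(* Main.v *)
Require Import Defs.
From Stdlib Require Import Reals List Lra Lia Classical FunctionalExtensionality PropExtensionality IndefiniteDescription.
Open Scope R_scope.

Lemma vadd_0l (X : LCTVS) (x : X) : vadd (vzero X) x = x.
Proof. rewrite vadd_comm. apply vadd_0. Qed.

Lemma vadd_cancel (X : LCTVS) (a x y : X) : vadd a x = vadd a y -> x = y.
Proof.
  intro H.
  assert (E : forall z : X, vadd (vopp a) (vadd a z) = z).
  { intro z. rewrite vadd_assoc, (vadd_comm X (vopp a) a), vadd_opp. apply vadd_0l. }
  rewrite <- (E x), <- (E y), H. reflexivity.
Qed.

Lemma vscal_0 (X : LCTVS) (x : X) : vscal 0 x = vzero X.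
Proof.
  apply (vadd_cancel X (vscal 0 x)).
  rewrite vadd_0, <- vscal_distr_s, Rplus_0_r. reflexivity.
Qed.

Lemma vscal_zero (X : LCTVS) (a : R) : vscal a (vzero X) = vzero X.
Proof.
  apply (vadd_cancel X (vscal a (vzero X))).
  rewrite vadd_0, <- vscal_distr_v, vadd_0. reflexivity.
Qed.

Lemma swap4 (X : LCTVS) (a b c d : X) :
  vadd (vadd a b) (vadd c d) = vadd (vadd a c) (vadd b d).
Proof.
  rewrite <- !vadd_assoc. f_equal. rewrite !vadd_assoc. f_equal. apply vadd_comm.
Qed.

Definition comb (X : LCTVS) (s : R) (u v : X) : X := vadd (vscal (1 - s) u) (vscal s v).

Lemma comb_seg (X : LCTVS) (l a b : R) (u w : X) :
  comb X l (vadd u (vscal a w)) (vadd u (vscal b w)) = vadd u (vscal ((1-l)*a + l*b) w).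
Proof.
  unfold comb. rewrite !vscal_distr_v, swap4, <- vscal_distr_s, !vscal_assoc, <- vscal_distr_s.
  replace (1 - l + l) with 1 by ring. rewrite vscal_1. reflexivity.
Qed.

Lemma seg0 (X : LCTVS) (u w : X) : vadd u (vscal 0 w) = u.
Proof. rewrite vscal_0, vadd_0. reflexivity. Qed.

Lemma seg1 (X : LCTVS) (u v : X) : vadd u (vscal 1 (vadd v (vopp u))) = v.
Proof. rewrite vscal_1, (vadd_comm X v), vadd_assoc, vadd_opp, vadd_0l. reflexivity. Qed.

Lemma segpt_comb (X : LCTVS) (u v : X) (s : R) : segpt X u v s = comb X s u v.
Proof.
  unfold segpt.
  transitivity (comb X s (vadd u (vscal 0 (vadd v (vopp u)))) (vadd u (vscal 1 (vadd v (vopp u))))).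
  - rewrite comb_seg. replace ((1 - s) * 0 + s * 1) with s by ring. reflexivity.
  - rewrite seg0, seg1. reflexivity.
Qed.

Lemma scal_eq_zero (X : LCTVS) (r r' : R) (w : X) :
  vscal r w = vscal r' w -> r <> r' -> w = vzero X.
Proof.
  intros H Hne.
  assert (H0 : vscal (r - r') w = vzero X).
  { unfold Rminus. rewrite vscal_distr_s, H, <- vscal_distr_s, Rplus_opp_r. apply vscal_0. }
  rewrite <- (vscal_1 X w). replace 1 with (/(r - r') * (r - r')) by (field; intro; apply Hne; lra).
  rewrite <- vscal_assoc, H0. apply vscal_zero.
Qed.

Lemma open_transl (X : LCTVS) (W : X -> Prop) (c : X) :
  is_open W -> is_open (fun x => W (vadd x c)).
Proof.
  intro HW.
  set (I := {A : X -> Prop | is_open A /\ forall z, A z -> W (vadd z c)}).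
  replace (fun x => W (vadd x c)) with (fun x => exists i : I, proj1_sig i x).
  - apply open_union. intro i. exact (proj1 (proj2_sig i)).
  - apply functional_extensionality. intro x. apply propositional_extensionality. split.
    + intros [[A [HA HAW]] Hx]. exact (HAW x Hx).
    + intro Hx. destruct (vadd_cont X x c W HW Hx) as [A [B [HA [HAx [HB [HBc HAB]]]]]].
      exists (exist _ A (conj HA (fun z Hz => HAB z c Hz HBc))). exact HAx.
Qed.

Lemma convex_nbhd (X : LCTVS) (W : X -> Prop) (z : X) :
  is_open W -> W z -> exists C : X -> Prop, is_open C /\ C z /\ (forall p, C p -> W p) /\
   (forall p q l, C p -> C q -> 0 <= l <= 1 -> C (comb X l p q)).
Proof.
  intros HW Hz.
  assert (H0 : (fun x => W (vadd x z)) (vzero X)) by (cbv beta; rewrite vadd_0l; exact Hz).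
  destruct (locally_convex X (fun x => W (vadd x z)) (open_transl X W z HW) H0)
    as [V [HV [HV0 [HVW HVc]]]].
  exists (fun x => V (vadd x (vopp z))). split; [|split; [|split]].
  - apply open_transl. exact HV.
  - cbv beta. rewrite vadd_opp. exact HV0.
  - intros p Hp. cbv beta in Hp. apply HVW in Hp. cbv beta in Hp.
    rewrite <- vadd_assoc, (vadd_comm X (vopp z)), vadd_opp, vadd_0 in Hp. exact Hp.
  - intros p q l Hp Hq Hl. cbv beta in *.
    replace (vadd (comb X l p q) (vopp z)) with (comb X l (vadd p (vopp z)) (vadd q (vopp z))).
    + apply HVc; assumption.
    + unfold comb. rewrite !vscal_distr_v, swap4, <- (vscal_distr_s X (1 - l) l (vopp z)).
      replace (1 - l + l) with 1 by ring. rewrite vscal_1. reflexivity.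
Qed.

Definition SDprop (X : LCTVS) (U : X -> Prop) := forall u v, U u -> U v ->
  forall t, 0 <= t <= 1 -> forall eta, 0 < eta ->
  exists s, 0 <= s <= 1 /\ Rabs (s - t) < eta /\ U (comb X s u v).

Lemma seg_density (X : LCTVS) (K U : X -> Prop) :
  self_segment_dense U K -> SDprop X U.
Proof.
  intros [_ Hd] u v Hu Hv t Ht eta Heta.
  destruct (classic (u = v)) as [Huv | Huv].
  { subst v. exists t. split; [exact Ht|]. split.
    - rewrite Rminus_diag, Rabs_R0. exact Heta.
    - unfold comb. rewrite <- vscal_distr_s. replace (1 - t + t) with 1 by ring.
      rewrite vscal_1. exact Hu. }
  set (w := vadd v (vopp u)).
  set (e := eta / 2).
  assert (He : 0 < e) by (unfold e; lra).
  assert (Hinj : forall r r', vadd u (vscal r w) = vadd u (vscal r' w) -> r = r').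
  { intros r r' H. destruct (Req_dec r r') as [E|E]; [exact E|exfalso].
    apply vadd_cancel in H. apply (scal_eq_zero X r r' w H) in E.
    apply Huv. symmetry. transitivity (vadd (vadd v (vopp u)) u).
    - rewrite <- vadd_assoc, (vadd_comm X (vopp u)), vadd_opp, vadd_0. reflexivity.
    - fold w. rewrite E, vadd_0l. reflexivity. }
  assert (Hne1 : vadd u (vscal t w) <> vadd u (vscal (t - e) w)).
  { intro H. apply Hinj in H. lra. }
  assert (Hne2 : vadd u (vscal t w) <> vadd u (vscal (t + e) w)).
  { intro H. apply Hinj in H. lra. }
  destruct (hausdorff X _ _ Hne1) as [A1 [B1 [HA1 [HA1z [HB1 [HB1p H1]]]]]].
  destruct (hausdorff X _ _ Hne2) as [A2 [B2 [HA2 [HA2z [HB2 [HB2p H2]]]]]].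
  destruct (convex_nbhd X (fun x => A1 x /\ A2 x) (vadd u (vscal t w))
              (open_inter X A1 A2 HA1 HA2) (conj HA1z HA2z))
    as [C [HC [HCz [HCW HCc]]]].
  assert (Hseg : segment u v (vadd u (vscal t w))) by (exists t; split; [exact Ht | reflexivity]).
  destruct (Hd u v Hu Hv _ Hseg C HC HCz) as [w' [HCw' [[s [Hs Hw's]] HUw']]].
  assert (Hb : forall r, ((t <= r <= s) \/ (s <= r <= t)) -> C (vadd u (vscal r w))).
  { intros r Hr. destruct (Rtotal_order s t) as [Lt|[Eq|Gt]].
    2:{ replace r with t by lra. exact HCz. }
    all: set (l := (r - t) / (s - t)).
    all: assert (El : l * (s - t) = r - t) by (unfold l; field; lra).
    all: assert (Hl : 0 <= l <= 1) by (destruct Hr as [Hr|Hr]; split; nra).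
    all: assert (E2 : (1 - l) * t + l * s = r)
           by (replace ((1-l)*t + l*s) with (t + l*(s-t)) by ring; rewrite El; ring).
    all: replace (vadd u (vscal r w)) with (comb X l (vadd u (vscal t w)) w');
      [ apply HCc; assumption
      | rewrite Hw's; unfold segpt; fold w; rewrite comb_seg, E2; reflexivity ]. }
  exists s. split; [exact Hs|]. split.
  - assert (Hlt : Rabs (s - t) < e).
    { destruct (Rlt_dec (Rabs (s - t)) e) as [L|L]; [exact L|exfalso].
      apply Rnot_lt_le in L.
      destruct (Rle_lt_dec 0 (s - t)) as [P|P].
      + rewrite Rabs_right in L by lra.
        destruct (HCW _ (Hb (t + e) ltac:(left; lra))) as [_ HA].
        exact (H2 _ (conj HA HB2p)).
      + rewrite Rabs_left in L by lra.
        destruct (HCW _ (Hb (t - e) ltac:(right; lra))) as [HA _].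
        exact (H1 _ (conj HA HB1p)). }
    unfold e in Hlt. lra.
  - rewrite <- segpt_comb, <- Hw's. exact HUw'.
Qed.

Lemma bound_lemma (a p r K : R) : Rabs a < r -> Rabs p <= K -> 0 < K -> a * p < r * K.
Proof.
  intros Ha Hp HK.
  apply Rle_lt_trans with (Rabs a * K).
  - apply Rle_trans with (Rabs (a * p)); [apply Rle_abs|].
    rewrite Rabs_mult. apply Rmult_le_compat_l; [apply Rabs_pos|exact Hp].
  - apply Rmult_lt_compat_r; assumption.
Qed.

Lemma abs_sub_le (a b : R) : Rabs (a - b) <= Rabs a + Rabs b.
Proof.
  unfold Rminus. rewrite <- (Rabs_Ropp b). apply Rabs_triang.
Qed.

Lemma two_fun (X : LCTVS) (U : X -> Prop) (phi1 phi2 : X -> R) (c d : R) :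
  SDprop X U -> convex_on U phi1 -> convex_on U phi2 -> 0 < d ->
  (forall t, 0 <= t <= 1 -> forall e, 0 < e ->
     exists x, U x /\ (1 - t) * phi1 x + t * phi2 x < c + e) ->
  exists x, U x /\ phi1 x < c + d /\ phi2 x < c + d.
Proof.
  intros SD C1 C2 Hd Hh.
  apply NNPP. intro Hno.
  assert (H : forall x, U x -> c + d <= phi1 x \/ c + d <= phi2 x).
  { intros x Hx. destruct (Rlt_le_dec (phi1 x) (c + d)); destruct (Rlt_le_dec (phi2 x) (c+d)); auto.
    exfalso. apply Hno. exists x. auto. }
  set (e := d / 4).
  assert (He : 0 < e) by (unfold e; lra).
  assert (Hed : 2 * e < d) by (unfold e; lra).
  assert (Mix : forall x x' t, U x -> U x' -> 0 <= t <= 1 ->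
     (1 - t) * phi1 x + t * phi2 x < c + e -> (1 - t) * phi1 x' + t * phi2 x' < c + e ->
     c + d <= phi1 x -> c + d <= phi2 x' -> False).
  { intros x x' t Hx Hx' Ht h1 h2 Ha1 Hb2.
    set (a1 := phi1 x) in *. set (a2 := phi2 x) in *.
    set (b1 := phi1 x') in *. set (b2 := phi2 x') in *.
    assert (Hda : a2 < a1) by nra.
    assert (Hdb : b1 < b2) by nra.
    set (s0 := (a1 - a2) / ((a1 - a2) + (b2 - b1))).
    assert (Hs0 : 0 < s0 < 1).
    { unfold s0. split.
      - apply Rdiv_lt_0_compat; lra.
      - apply (Rmult_lt_reg_r ((a1 - a2) + (b2 - b1))); [lra|].
        unfold Rdiv. rewrite Rmult_assoc, Rinv_l by lra. lra. }
    set (z1 := (1 - s0) * a1 + s0 * b1).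
    set (z2 := (1 - s0) * a2 + s0 * b2).
    assert (Ez : z1 = z2).
    { unfold z1, z2, s0. field. lra. }
    assert (Hz : (1 - t) * z1 + t * z2 < c + e).
    { replace ((1 - t) * z1 + t * z2) with
        ((1 - s0) * ((1 - t) * a1 + t * a2) + s0 * ((1 - t) * b1 + t * b2))
        by (unfold z1, z2; ring).
      nra. }
    rewrite <- Ez in Hz.
    replace ((1 - t) * z1 + t * z1) with z1 in Hz by ring.
    set (K := 1 + Rabs a1 + Rabs a2 + Rabs b1 + Rabs b2).
    assert (HK : 0 < K) by (unfold K; pose proof (Rabs_pos a1); pose proof (Rabs_pos a2);
       pose proof (Rabs_pos b1); pose proof (Rabs_pos b2); lra).
    destruct (SD x x' Hx Hx' s0 ltac:(lra) (e / K) ltac:(apply Rdiv_lt_0_compat; lra))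
      as [s [Hs [Hss HU]]].
    assert (Hsm1 : (s - s0) * (b1 - a1) < (e / K) * K).
    { apply bound_lemma; auto. apply Rle_trans with (Rabs b1 + Rabs a1); [apply abs_sub_le|].
      unfold K; pose proof (Rabs_pos a2); pose proof (Rabs_pos b2); lra. }
    assert (Hsm2 : (s - s0) * (b2 - a2) < (e / K) * K).
    { apply bound_lemma; auto. apply Rle_trans with (Rabs b2 + Rabs a2); [apply abs_sub_le|].
      unfold K; pose proof (Rabs_pos a1); pose proof (Rabs_pos b1); lra. }
    replace (e / K * K) with e in Hsm1, Hsm2 by (field; lra).
    assert (P1 : phi1 (comb X s x x') <= (1 - s) * a1 + s * b1) by exact (C1 x x' s Hx Hx' Hs HU).
    assert (P2 : phi2 (comb X s x x') <= (1 - s) * a2 + s * b2) by exact (C2 x x' s Hx Hx' Hs HU).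
    assert (Q1 : (1 - s) * a1 + s * b1 = z1 + (s - s0) * (b1 - a1)) by (unfold z1; ring).
    assert (Q2 : (1 - s) * a2 + s * b2 = z2 + (s - s0) * (b2 - a2)) by (unfold z2; ring).
    destruct (H _ HU) as [G|G]; lra. }
  set (A := fun t => 0 <= t <= 1 /\ exists x, U x /\ (1 - t) * phi1 x + t * phi2 x < c + e
                                              /\ c + d <= phi2 x).
  assert (A0 : A 0).
  { destruct (Hh 0 ltac:(lra) e He) as [x [Hx Hlt]].
    split; [lra|]. exists x. split; [exact Hx|]. split; [exact Hlt|].
    destruct (H x Hx) as [G|G]; [|exact G]. unfold e in *; lra. }
  destruct (completeness A) as [tau [Hub Hlub]].
  { exists 1. intros t [Ht _]. lra. }
  { exists 0. exact A0. }
  assert (Htau0 : 0 <= tau) by (apply Hub; exact A0).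
  assert (Htau1 : tau <= 1) by (apply Hlub; intros t [Ht _]; lra).
  destruct (Hh tau ltac:(lra) e He) as [x [Hx Hlt]].
  set (g := c + e - ((1 - tau) * phi1 x + tau * phi2 x)).
  assert (Hg : 0 < g) by (unfold g; lra).
  set (K := 1 + Rabs (phi1 x) + Rabs (phi2 x)).
  assert (HK : 0 < K) by (unfold K; pose proof (Rabs_pos (phi1 x)); pose proof (Rabs_pos (phi2 x)); lra).
  assert (HpK : Rabs (phi2 x - phi1 x) <= K).
  { apply Rle_trans with (Rabs (phi2 x) + Rabs (phi1 x)); [apply abs_sub_le|]. unfold K; lra. }
  assert (Hgk : 0 < g / K) by (apply Rdiv_lt_0_compat; lra).
  destruct (H x Hx) as [T1|T2].
  -
    set (r := g / K).
    assert (Ht : exists t, A t /\ tau - r < t).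
    { apply NNPP. intro N.
      assert (Hu : is_upper_bound A (tau - r)).
      { intros t Ht. destruct (Rle_lt_dec t (tau - r)) as [L|L]; auto.
        exfalso. apply N. exists t. auto. }
      specialize (Hlub _ Hu). unfold r in Hlub. lra. }
    destruct Ht as [t [[Ht [x' [Hx' [Hlt' Hp']]]] Htr]].
    assert (Htt : t <= tau) by (apply Hub; split; [exact Ht| exists x'; auto]).
    assert (Hb : (t - tau) * (phi2 x - phi1 x) < r * K).
    { apply bound_lemma; auto. rewrite Rabs_left1 by lra. lra. }
    unfold r in Hb. replace (g / K * K) with g in Hb by (field; lra).
    apply (Mix x x' t Hx Hx' Ht); auto.
    replace ((1 - t) * phi1 x + t * phi2 x) with
      ((1 - tau) * phi1 x + tau * phi2 x + (t - tau) * (phi2 x - phi1 x)) by ring.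
    unfold g in Hb. lra.
  -
    destruct (Req_dec tau 1) as [E|E].
    { rewrite E in Hlt. unfold e in *; lra. }
    set (r := Rmin (1 - tau) (g / K) / 2).
    assert (Hr : 0 < r) by (unfold r; assert (0 < Rmin (1 - tau) (g / K)) by (apply Rmin_pos; lra); lra).
    assert (Hr1 : r <= (1 - tau) / 2) by (unfold r; pose proof (Rmin_l (1 - tau) (g / K)); lra).
    assert (Hr2 : r < g / K) by (unfold r; pose proof (Rmin_r (1 - tau) (g / K)); lra).
    assert (Hb : r * (phi2 x - phi1 x) < (g / K) * K).
    { apply bound_lemma; auto. rewrite Rabs_right by lra. exact Hr2. }
    replace (g / K * K) with g in Hb by (field; lra).
    assert (HA : A (tau + r)).
    { split; [lra|]. exists x. split; [exact Hx|]. split; [|exact T2].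
      replace ((1 - (tau + r)) * phi1 x + (tau + r) * phi2 x) with
        ((1 - tau) * phi1 x + tau * phi2 x + r * (phi2 x - phi1 x)) by ring.
      unfold g in Hb. lra. }
    specialize (Hub _ HA). lra.
Qed.

Fixpoint gmax {A Y : Type} (f : A -> Y -> R) (x : A) (y0 : Y) (L : list Y) : R :=
  match L with nil => f x y0 | y :: L' => Rmax (f x y) (gmax f x y0 L') end.

Lemma gmax_ge {A Y : Type} (f : A -> Y -> R) x y0 L y :
  (y = y0 \/ In y L) -> f x y <= gmax f x y0 L.
Proof.
  induction L as [|a L IH]; simpl; intros [E|E].
  - subst; lra.
  - destruct E.
  - eapply Rle_trans; [apply IH; left; exact E| apply Rmax_r].
  - destruct E as [<-|E]; [apply Rmax_l|].
    eapply Rle_trans; [apply IH; right; exact E| apply Rmax_r].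
Qed.

Lemma gmax_att {A Y : Type} (f : A -> Y -> R) x y0 L : exists y, gmax f x y0 L = f x y.
Proof.
  induction L as [|a L IH]; simpl.
  - exists y0; reflexivity.
  - unfold Rmax. destruct (Rle_dec (f x a) (gmax f x y0 L)); [exact IH| exists a; reflexivity].
Qed.

Lemma rmax_convex (X : LCTVS) (U : X -> Prop) (g1 g2 : X -> R) :
  convex_on U g1 -> convex_on U g2 -> convex_on U (fun x => Rmax (g1 x) (g2 x)).
Proof.
  intros C1 C2 u v t Hu Hv Ht HU.
  apply Rmax_lub.
  - eapply Rle_trans; [apply C1; eauto|].
    apply Rplus_le_compat; apply Rmult_le_compat_l; try lra; apply Rmax_l.
  - eapply Rle_trans; [apply C2; eauto|].
    apply Rplus_le_compat; apply Rmult_le_compat_l; try lra; apply Rmax_r.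
Qed.

Lemma gmax_convex (X : LCTVS) (U : X -> Prop) (Y : Type) (f : X -> Y -> R) y0 L :
  (forall y, convex_on U (fun x => f x y)) -> convex_on U (fun x => gmax f x y0 L).
Proof.
  intro Hc. induction L as [|a L IH]; simpl.
  - apply Hc.
  - apply rmax_convex; [apply Hc| exact IH].
Qed.

Lemma comb_max (t a p q : R) : 0 <= t ->
  (1 - t) * a + t * Rmax p q <= Rmax ((1 - t) * a + t * p) ((1 - t) * a + t * q).
Proof.
  intro Ht. unfold Rmax.
  destruct (Rle_dec p q); destruct (Rle_dec ((1 - t) * a + t * p) ((1 - t) * a + t * q)); nra.
Qed.

Lemma gmax_dom (X : LCTVS) (U : X -> Prop) (Y : Type) (f : X -> Y -> R) :
  (forall y1 y2 t, 0 <= t <= 1 -> exists y3, forall x, U x ->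
           f x y3 >= (1 - t) * f x y1 + t * f x y2) ->
  forall t, 0 <= t <= 1 -> forall y1 y0 L, exists y0' L', length L' = length L /\
    forall x, U x -> (1 - t) * f x y1 + t * gmax f x y0 L <= gmax f x y0' L'.
Proof.
  intros Hii t Ht y1 y0 L. induction L as [|y L IH].
  - destruct (Hii y1 y0 t Ht) as [y3 Hy3]. exists y3, nil. split; [reflexivity|].
    intros x Hx. simpl. apply Rge_le, Hy3, Hx.
  - destruct IH as [y0' [L' [Hlen Hle]]]. destruct (Hii y1 y t Ht) as [y3 Hy3].
    exists y0', (y3 :: L'). split; [simpl; rewrite Hlen; reflexivity|].
    intros x Hx. simpl. eapply Rle_trans; [apply comb_max; lra|].
    apply Rmax_lub.
    + eapply Rle_trans; [apply Rge_le, Hy3, Hx| apply Rmax_l].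
    + eapply Rle_trans; [apply Hle, Hx| apply Rmax_r].
Qed.

Lemma claim (X : LCTVS) (U : X -> Prop) (Y : Type) (f : X -> Y -> R) (c : R) :
  SDprop X U -> (forall y, convex_on U (fun x => f x y)) ->
  (forall y1 y2 t, 0 <= t <= 1 -> exists y3, forall x, U x ->
           f x y3 >= (1 - t) * f x y1 + t * f x y2) ->
  (forall y, exists x, U x /\ f x y <= c) ->
  forall n y0 L, length L = n -> forall d, 0 < d -> exists x, U x /\ gmax f x y0 L < c + d.
Proof.
  intros SD Hc Hii Hmin n. induction n as [|n IH]; intros y0 L HL d Hd.
  - destruct L; [|discriminate]. destruct (Hmin y0) as [x [Hx Hle]].
    exists x. split; [exact Hx|]. simpl. lra.
  - destruct L as [|y1 L']; [discriminate|]. simpl in HL. injection HL as HL.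
    destruct (two_fun X U (fun x => f x y1) (fun x => gmax f x y0 L') c d SD (Hc y1)
                (gmax_convex X U Y f y0 L' Hc) Hd) as [x [Hx [H1 H2]]].
    { intros t Ht e He.
      destruct (gmax_dom X U Y f Hii t Ht y1 y0 L') as [y0' [L'' [Hlen Hle]]].
      destruct (IH y0' L'' ltac:(lia) e He) as [x [Hx Hlt]].
      exists x. split; [exact Hx|]. specialize (Hle x Hx). lra. }
    exists x. split; [exact Hx|]. simpl. apply Rmax_lub_lt; assumption.
Qed.

Theorem mainTheorem14 (X : LCTVS) (K U : X -> Prop) (Y : Type) (f : X -> Y -> R)
  (HKne : exists x, K x)
  (HKconv : convex_set K)
  (HYne : inhabited Y)
  (HYfin : exists l : list Y, forall y, In y l)
  (HUK : forall x, U x -> K x)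
  (HUssd : self_segment_dense U K)
  (Hi : forall y, convex_on U (fun x => f x y) /\ lsc_on U (fun x => f x y))
  (Hii : forall y1 y2 t, 0 <= t <= 1 -> exists y3, forall x, U x ->
           f x y3 >= (1 - t) * f x y1 + t * f x y2)
  (Hiii : forall y, exists x0, U x0 /\ forall x, U x -> f x0 y <= f x y) :
  exists v : R,
    is_inf (fun r => exists x, U x /\ is_sup (fun s => exists y, s = f x y) r) v /\
    is_sup (fun r => exists y, is_min (fun s => exists x, U x /\ s = f x y) r) v.
Proof.
  destruct HYfin as [l Hl].
  destruct HYne as [y_inh].
  assert (SD : SDprop X U) by (apply (seg_density X K U HUssd)).
  assert (Hconv : forall y, convex_on U (fun x => f x y)) by (intro y; apply (Hi y)).
  set (m := fun y => proj1_sig (constructive_indefinite_description _ (Hiii y))).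
  assert (Hm : forall y, U (m y) /\ forall x, U x -> f (m y) y <= f x y).
  { intro y. exact (proj2_sig (constructive_indefinite_description _ (Hiii y))). }
  assert (Hmax : forall l0 : list Y, exists ys, forall y, In y l0 -> f (m y) y <= f (m ys) ys).
  { induction l0 as [|a l0 IH].
    - exists y_inh. intros y [].
    - destruct IH as [ys Hys]. destruct (Rle_dec (f (m a) a) (f (m ys) ys)).
      + exists ys. intros y [<-|Hy]; auto.
      + exists a. intros y [<-|Hy]; [lra|]. specialize (Hys y Hy). lra. }
  destruct (Hmax l) as [ys Hys].
  set (c := f (m ys) ys).
  assert (Hc : forall y, exists x, U x /\ f x y <= c).
  { intro y. exists (m y). split; [apply Hm|]. apply Hys, Hl. }
  exists c. split; [split|split].
  - intros r [x [Hx [Hub _]]].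
    apply Rle_trans with (f x ys); [apply (proj2 (Hm ys)), Hx|].
    apply Hub. exists ys. reflexivity.
  - intros b Hb. destruct (Rle_lt_dec b c) as [L|L]; [exact L|exfalso].
    destruct (claim X U Y f c SD Hconv Hii Hc (length l) ys l eq_refl (b - c) ltac:(lra))
      as [x [Hx Hlt]].
    assert (Hr : b <= gmax f x ys l).
    { apply Hb. exists x. split; [exact Hx|]. split.
      - intros s [y ->]. apply gmax_ge. right; apply Hl.
      - intros b' Hb'. destruct (gmax_att f x ys l) as [y Hy]. rewrite Hy.
        apply Hb'. exists y; reflexivity. }
    lra.
  - intros r [y [_ Hmin]].
    apply Rle_trans with (f (m y) y).
    + apply Hmin. exists (m y). split; [apply Hm|reflexivity].
    + apply Hys, Hl.
  - intros b Hb. apply Hb. exists ys. split.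
    + exists (m ys). split; [apply Hm|reflexivity].
    + intros r [x [Hx ->]]. apply Hm; exact Hx.
Qed.
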